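(* Let $(V,E,\sigma)$ be an influence graph and let $\mu : V \rightarrow \{+,-\}$ be a (partial) vertex labeling. If $(V,E,\sigma)$ and $\mu$ are consistent, then the disjunctive logic program $P_C\cup\tau((V,E,\sigma),\mu)$ has an answer set.
   Context: An influence graph is a triple $(V,E,\sigma)$ where $V$ is a finite set of vertices, $E\subseteq V\times V$ is a set of directed edges (an edge from $j$ to $i$ is written $j\rightarrow i$), and $\sigma : E\rightarrow\{+,-\}$ is a partial labeling of the edges; in addition, some vertices of $V$ are designated as input vertices. Signs are multiplied as numbers ($++=--=+$, $+-=-+=-$). Given a partial vertex labeling $\mu: V\rightarrow\{+,-\}$, the pair $(V,E,\sigma)$ and $\mu$ are called consistent if there exist total extensions $\sigma':E\rightarrow\{+,-\}$ of $\sigma$ and $\mu':V\rightarrow\{+,-\}$ of $\mu$ such that for every non-input vertex $i\in V$ there is an edge $j\rightarrow i$ in $E$ with $\mu'(i)=\mu'(j)\sigma'(j,i)$. Answer set semantics: a disjunctive logic program is a set of rules $a_1;\dots;a_l \leftarrow b_1,\dots,b_m,\mathit{not}\ c_1,\dots,\mathit{not}\ c_n$ (with $l=0$ giving an integrity constraint, whose empty head is false). Rules with (capitalized) variables stand for all their ground instances obtained by substituting constants occurring in the program; a built-in comparison $S\neq T$ in a body keeps only instances where the substituted constants differ. For a set $X$ of ground atoms, the reduct $P^X$ consists of $\{a_1,\dots,a_l\}\leftarrow b_1,\dots,b_m$ for each ground rule with $\{c_1,\dots,c_n\}\cap X=\emptyset$; $X$ is an answer set of $P$ if it is a $\subseteq$-minimal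 model of $P^X$ (a rule is satisfied if some head atom is in $X$ whenever all $b_k$ are in $X$). Here $+$ and $-$ are constants and vertex names are constants. The instance $\tau((V,E,\sigma),\mu)$ is the set of facts: $\mathit{vertex}(i)$ for each $i\in V$; $\mathit{edge}(j,i)$ for each $j\rightarrow i$ in $E$; $\mathit{observedE}(j,i,s)$ whenever $\sigma(j,i)=s$ is defined; $\mathit{observedV}(i,s)$ whenever $\mu(i)=s$ is defined; $\mathit{input}(i)$ for each input vertex $i$. The program $P_C$ consists of the rules $\mathit{labelV}(V,+);\mathit{labelV}(V,-)\leftarrow \mathit{vertex}(V)$; $\mathit{labelE}(U,V,+);\mathit{labelE}(U,V,-)\leftarrow \mathit{edge}(U,V)$; $\mathit{labelV}(V,S)\leftarrow \mathit{observedV}(V,S)$; $\mathit{labelE}(U,V,S)\leftarrow \mathit{observedE}(U,V,S)$; $\mathit{receive}(V,+)\leftarrow \mathit{labelE}(U,V,S),\mathit{labelV}(U,S)$; $\mathit{receive}(V,-)\leftarrow \mathit{labelE}(U,V,S),\mathit{labelV}(U,T),S\neq T$; $\leftarrow \mathit{labelV}(V,S),\mathit{not}\ \mathit{receive}(V,S),\mathit{not}\ \mathit{input}(V)$. *)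

(* Defs.v *)
From mathcomp Require Import all_boot.
Set Implicit Arguments. Unset Strict Implicit. Unset Printing Implicit Defensive.

Inductive sign := Pos | Neg.

Definition smul (a b : sign) : sign :=
  match a, b with
  | Pos, Pos | Neg, Neg => Pos
  | _, _ => Neg
  end.

(* An influence graph on the finite vertex type V: edges E (E j i means j -> i),
   partial edge labeling sigma (None = undefined), input vertices [input]. *)
Definition consistent (V : finType) (E : rel V) (sigma : V -> V -> option sign)
    (input : pred V) (mu : V -> option sign) : Prop :=
  exists (sigma' : V -> V -> sign) (mu' : V -> sign),
    (forall j i s, E j i -> sigma j i = Some s -> sigma' j i = s) /\
    (forall i s, mu i = Some s -> mu' i = s) /\
    (forall i, ~~ input i -> exists2 j, E j i & mu' i = smul (mu' j) (sigma' j i)).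

Fixpoint lIn (A : Type) (a : A) (l : list A) : Prop :=
  match l with nil => False | b :: l' => b = a \/ lIn a l' end.

(* ground rule  h_1;...;h_l <- b_1,...,b_m, not c_1,...,not c_n *)
Record grule (A : Type) := GRule { head : list A; pos : list A; neg : list A }.

(* Y is a model of the reduct P^X (P a set of ground rules, sets of atoms as
   predicates). *)
Definition model_of_reduct (A : Type) (P : grule A -> Prop) (X Y : A -> Prop) : Prop :=
  forall r, P r -> (forall c, lIn c (neg r) -> ~ X c) ->
    (forall b, lIn b (pos r) -> Y b) -> exists2 a, lIn a (head r) & Y a.

Definition answer_set (A : Type) (P : grule A -> Prop) (X : A -> Prop) : Prop :=
  model_of_reduct P X X /\
  (forall Y : A -> Prop, (forall a, Y a -> X a) -> model_of_reduct P X Y ->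
     forall a, X a -> Y a).

Inductive const (V : Type) := CV of V | CS of sign.
Arguments CS {V}.

Inductive atom (V : Type) :=
  | vertex of const V
  | edge of const V & const V
  | observedE of const V & const V & const V
  | observedV of const V & const V
  | input of const V
  | labelV of const V & const V
  | labelE of const V & const V & const V
  | receive of const V & const V.

Definition plus {V : Type} : const V := CS Pos.
Definition minus {V : Type} : const V := CS Neg.

(* Ground instances of the rules of P_C (variables range over all constants). *)
Definition P_C (V : Type) (r : grule (atom V)) : Prop :=
  (exists v, r = GRule [:: labelV v plus; labelV v minus] [:: vertex v] [::])
  \/ (exists u v, r = GRule [:: labelE u v plus; labelE u v minus] [:: edge u v] [::])
  \/ (exists v s, r = GRule [:: labelV v s] [:: observedV v s] [::])
  \/ (exists u v s, r = GRule [:: labelE u v s] [:: observedE u v s] [::])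
  \/ (exists u v s, r = GRule [:: receive v plus] [:: labelE u v s; labelV u s] [::])
  \/ (exists u v s t, s <> t /\
        r = GRule [:: receive v minus] [:: labelE u v s; labelV u t] [::])
  \/ (exists v s, r = GRule [::] [:: labelV v s] [:: receive v s; input v]).

Definition tau_fact (V : finType) (E : rel V) (sigma : V -> V -> option sign)
    (inp : pred V) (mu : V -> option sign) (a : atom V) : Prop :=
  (exists i, a = vertex (CV i))
  \/ (exists j i, E j i /\ a = edge (CV j) (CV i))
  \/ (exists j i s, E j i /\ sigma j i = Some s /\ a = observedE (CV j) (CV i) (CS s))
  \/ (exists i s, mu i = Some s /\ a = observedV (CV i) (CS s))
  \/ (exists i, inp i /\ a = input (CV i)).

Definition tau (V : finType) (E : rel V) (sigma : V -> V -> option sign)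
    (inp : pred V) (mu : V -> option sign) (r : grule (atom V)) : Prop :=
  exists2 a, tau_fact E sigma inp mu a & r = GRule [:: a] [::] [::].

Definition PC_tau (V : finType) (E : rel V) (sigma : V -> V -> option sign)
    (inp : pred V) (mu : V -> option sign) (r : grule (atom V)) : Prop :=
  P_C r \/ tau E sigma inp mu r.

(* Main.v *)
Require Import Defs.
From mathcomp Require Import all_boot.

Ltac invX H :=
  destruct H as [[[? Heq]|[[? [? [? Heq]]]|[[? [? [? [? [? Heq]]]]]|[[? [? [? Heq]]]|[? [? Heq]]]]]]|[[? Heq]|[[? [? [? Heq]]]|[? [? [? Heq]]]]]];
  inversion Heq; subst; clear Heq.

Theorem theorem2 (V : finType) (E : rel V) (sigma : V -> V -> option sign)
    (inp : pred V) (mu : V -> option sign) :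
  consistent E sigma inp mu ->
  exists X : atom V -> Prop, answer_set (PC_tau E sigma inp mu) X.
Proof.
move=> [sigma' [mu' [Hs [Hm Hc]]]].
pose X (a : atom V) :=
  tau_fact E sigma inp mu a
  \/ (exists i, a = labelV (CV i) (CS (mu' i)))
  \/ (exists j i, E j i /\ a = labelE (CV j) (CV i) (CS (sigma' j i)))
  \/ (exists j i, E j i /\ a = receive (CV i) (CS (smul (mu' j) (sigma' j i)))).
exists X; split.
- move=> r [HP|[a Ha ->]]; last first.
    by move=> _ _; exists a; [left | left].
  move=> Hneg Hpos.
  destruct HP as [[v ->]|[[u [v ->]]|[[v [s ->]]|[[u [v [s ->]]]|[[u [v [s ->]]]|[[u [v [s [t [Hst ->]]]]]|[v [s ->]]]]]]]]; simpl in *.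
  + have H := Hpos _ (or_introl erefl). invX H.
    case E1: (mu' x).
    * exists (labelV (CV x) plus); first by left.
      right; left; exists x; by rewrite E1.
    * exists (labelV (CV x) minus); first by right; left.
      right; left; exists x; by rewrite E1.
  + have H := Hpos _ (or_introl erefl). invX H.
    case E1: (sigma' x x0).
    * exists (labelE (CV x) (CV x0) plus); first by left.
      right; right; left; exists x, x0; by rewrite E1.
    * exists (labelE (CV x) (CV x0) minus); first by right; left.
      right; right; left; exists x, x0; by rewrite E1.
  + have H := Hpos _ (or_introl erefl). invX H.
    exists (labelV (CV x) (CS x0)); first by left.
    right; left; exists x; by rewrite (Hm _ _ ltac:(eassumption)).
  + have H := Hpos _ (or_introl erefl). invX H.
    exists (labelE (CV x) (CV x0) (CS x1)); first by left.
    right; right; left; exists x, x0; by rewrite (Hs _ _ _ ltac:(eassumption) ltac:(eassumption)).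
  + have H := Hpos _ (or_introl erefl). have H' := Hpos _ (or_intror (or_introl erefl)).
    invX H. invX H'.
    exists (receive (CV x0) plus); first by left.
    right; right; right; exists x1, x0; split => //.
    match goal with HH : sigma' _ _ = mu' _ |- _ => rewrite HH end; by case: (mu' x1).
  + have H := Hpos _ (or_introl erefl). have H' := Hpos _ (or_intror (or_introl erefl)).
    invX H. invX H'.
    exists (receive (CV x0) minus); first by left.
    right; right; right; exists x1, x0; split => //.
    move: Hst; case: (mu' x1); case: (sigma' x1 x0) => //= Hst; by case: Hst.
  + have H := Hpos _ (or_introl erefl). invX H.
    exfalso.
    case Hi: (inp x).
    * apply: (Hneg (input (CV x))); first by right; left.
      left; right; right; right; right; exists x; split => //.
    * have [j Hj Heq] := Hc x (negbT Hi).
      apply: (Hneg (receive (CV x) (CS (mu' x)))); first by left.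
      right; right; right; exists j, x; by rewrite -Heq.
- move=> Y HYX HY.
  have Hfact : forall a, tau_fact E sigma inp mu a -> Y a.
    move=> a Ha.
    have [a' Ha' HYa'] := HY (GRule [:: a] [::] [::]) (or_intror (ex_intro2 _ _ a Ha erefl))
      (fun c (H : lIn c [::]) => match H with end) (fun b (H : lIn b [::]) => match H with end).
    by case: Ha' => [->|[]].
  have pos1 : forall b, Y b -> forall c, lIn c [:: b] -> Y c.
    by move=> b Hb c [<-|[]].
  have pos2 : forall b1 b2, Y b1 -> Y b2 -> forall c, lIn c [:: b1; b2] -> Y c.
    by move=> b1 b2 H1 H2 c [<-|[<-|[]]].
  have HlV : forall i, Y (labelV (CV i) (CS (mu' i))).
    move=> i.
    have [a' Ha' HYa'] := HY (GRule [:: labelV (CV i) plus; labelV (CV i) minus] [:: vertex (CV i)] [::])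
      (or_introl (or_introl (ex_intro _ (CV i) erefl)))
      (fun c (H : lIn c [::]) => match H with end)
      (pos1 _ (Hfact _ (or_introl (ex_intro _ i erefl)))).
    have HX := HYX _ HYa'.
    case: Ha' => [Heq|[Heq|[]]]; subst a'; invX HX; exact: HYa'.
  have HlE : forall j i, E j i -> Y (labelE (CV j) (CV i) (CS (sigma' j i))).
    move=> j i Eji.
    have [a' Ha' HYa'] := HY (GRule [:: labelE (CV j) (CV i) plus; labelE (CV j) (CV i) minus] [:: edge (CV j) (CV i)] [::])
      (or_introl (or_intror (or_introl (ex_intro _ (CV j) (ex_intro _ (CV i) erefl)))))
      (fun c (H : lIn c [::]) => match H with end)
      (pos1 _ (Hfact _ (or_intror (or_introl (ex_intro _ j (ex_intro _ i (conj Eji erefl))))))).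
    have HX := HYX _ HYa'.
    case: Ha' => [Heq|[Heq|[]]]; subst a'; invX HX; exact: HYa'.
  move=> a [Ha|[[i ->]|[[j [i [Eji ->]]]|[j [i [Eji ->]]]]]]; auto.
  have [Heq|Heq] : sigma' j i = mu' j \/ sigma' j i <> mu' j.
    by case: (sigma' j i); case: (mu' j); [left|right|right|left].
  +     have [a' Ha' HYa'] := HY (GRule [:: receive (CV i) plus] [:: labelE (CV j) (CV i) (CS (sigma' j i)); labelV (CV j) (CS (sigma' j i))] [::])
      (or_introl (or_intror (or_intror (or_intror (or_intror (or_introl
         (ex_intro _ (CV j) (ex_intro _ (CV i) (ex_intro _ (CS (sigma' j i)) erefl)))))))))
      (fun c (H : lIn c [::]) => match H with end)
      (pos2 _ _ (HlE _ _ Eji) (eq_ind_r (fun z => Y (labelV (CV j) (CS z))) (HlV j) Heq)).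
    case: Ha' => [Ha'|[]]; subst a'.
    by rewrite Heq; case: (mu' j).
  +     have [a' Ha' HYa'] := HY (GRule [:: receive (CV i) minus] [:: labelE (CV j) (CV i) (CS (sigma' j i)); labelV (CV j) (CS (mu' j))] [::])
      (or_introl (or_intror (or_intror (or_intror (or_intror (or_intror (or_introl
         (ex_intro _ (CV j) (ex_intro _ (CV i) (ex_intro _ (CS (sigma' j i)) (ex_intro _ (CS (mu' j)) (conj (fun e : CS (sigma' j i) = CS (mu' j) => Heq (f_equal (fun c => match c with CS z => z | CV _ => sigma' j i end) e)) erefl))))))))))))
      (fun c (H : lIn c [::]) => match H with end)
      (pos2 _ _ (HlE _ _ Eji) (HlV j)).
    case: Ha' => [Ha'|[]]; subst a'.
    by move: Heq; case: (mu' j); case: (sigma' j i).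
Qed.
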